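(* Let \[D_1=\{t\in[a,b]\cap N_g^-: t\in (D_g\cap[a,t))'\},\quad D_2=\{t\in[a,b]\cap N_g^+: t\in (D_g\cap(t,b])'\},\] \[D_3=\{t\in[a,b]\setminus (N_g\cup D_g): t\in (D_g\cap[a,b])'\},\] and consider the restriction $\Delta g|_{[a,b]}$. For $t\in[a,b]$: 1. If $t^*\in D_1\cup D_2\cup D_3$, then $\Delta g|_{[a,b]}$ is $g$-differentiable at $t$ if and only if $\displaystyle\lim_{s\to t^*,\ s\in D_g}\frac{\Delta g|_{[a,b]}(s)}{g(s)-g(t)}=0$, the limit being the left-hand one if $t^*\in N_g^-$ and the right-hand one if $t^*\in N_g^+$. 2. In any other case, $\Delta g|_{[a,b]}$ is $g$-differentiable at $t$. Furthermore, if $\Delta g|_{[a,b]}$ is $g$-differentiable at $t$, then $(\Delta g|_{[a,b]})'_g(t)=-\chi_{D_g}(t^* )$. In particular, $\Delta g|_{[a,b]}$ is $g$-differentiable on $[a,b]$ with this derivative if $\displaystyle\lim_{s\to t,\ s\in D_g}\frac{\Delta g|_{[a,b]}(s)}{g(s)-g(t)}=0$ for all $t\in D_1\cup D_2\cup D_3$ (with the same convention on one-sided limits).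
   Context: Let $g:\mathbb R\to\mathbb R$ be nondecreasing and left-continuous. $\Delta g(t)=g(t^+)-g(t)$, $D_g=\{t:\Delta g(t)>0\}$, $C_g=\{t: g\text{ constant on }(t-\varepsilon,t+\varepsilon)\text{ for some }\varepsilon>0\}=\bigcup_{n\in\Lambda}(a_n,b_n)$ (disjoint union of connected components), $N_g^-=\{a_n\}\setminus D_g$, $N_g^+=\{b_n\}\setminus D_g$, $N_g=N_g^-\cup N_g^+$. Fix $a<b$ with $a\notin N_g^-$, $b\notin D_g\cup C_g\cup N_g^+$. For $t\in[a,b]$, $t^*=t$ if $t\notin C_g$ and $t^*=b_n$ if $t\in(a_n,b_n)$. The $g$-derivative of $u:[a,b]\to\mathbb R$ at $t$ is $u'_g(t)=\lim_{s\to t}\frac{u(s)-u(t)}{g(s)-g(t)}$ if $t\notin D_g\cup C_g$ and $u'_g(t)=\lim_{s\to t^{*+}}\frac{u(s)-u(t^* )}{g(s)-g(t^* )}$ if $t\in D_g\cup C_g$, provided the finite limit exists; limits are over $s\in[a,b]$ with nonzero denominator, and at points of $N_g^+\cup\{a\}$ only the right-hand limit, at points of $N_g^-\cup\{b\}$ only the left-hand limit is taken. $X'$ is the set of accumulation points of $X$; $\chi_{D_g}$ the indicator of $D_g$. *)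

(* Defs.v *)
From Stdlib Require Import Reals.
From Coquelicot Require Import Coquelicot.
Open Scope R_scope.

Definition nondecreasing (g : R -> R) : Prop :=
  forall x y, x <= y -> g x <= g y.
Definition left_continuous (g : R -> R) : Prop :=
  forall t, filterlim g (at_left t) (locally (g t)).

(* g(t^+) : right-hand limit; for nondecreasing g it equals inf_{s>t} g s *)
Definition gplus (g : R -> R) (t : R) : R :=
  real (Glb_Rbar (fun y => exists s, t < s /\ y = g s)).

Definition DeltaG (g : R -> R) (t : R) : R := gplus g t - g t.

Definition Dg (g : R -> R) (t : R) : Prop := DeltaG g t > 0.

Definition Cg (g : R -> R) (t : R) : Prop :=
  exists eps, eps > 0 /\
    forall x y, Rabs (x - t) < eps -> Rabs (y - t) < eps -> g x = g y.

(* (c,d) is a connected component of the open set C_g (c,d possibly infinite) *)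
Definition Cg_component (g : R -> R) (c d : Rbar) : Prop :=
  Rbar_lt c d /\
  (forall x : R, Rbar_lt c x -> Rbar_lt x d -> Cg g x) /\
  (forall r : R, c = Finite r -> ~ Cg g r) /\
  (forall r : R, d = Finite r -> ~ Cg g r).

Definition Ngm (g : R -> R) (t : R) : Prop :=
  (exists d, Cg_component g (Finite t) d) /\ ~ Dg g t.
Definition Ngp (g : R -> R) (t : R) : Prop :=
  (exists c, Cg_component g c (Finite t)) /\ ~ Dg g t.
Definition Ng (g : R -> R) (t : R) : Prop := Ngm g t \/ Ngp g t.

Definition is_tstar (g : R -> R) (t ts : R) : Prop :=
  (~ Cg g t /\ ts = t) \/
  (exists c : Rbar, Cg_component g c (Finite ts) /\ Rbar_lt c t /\ t < ts).

(* u'_g(t) = L (as a relation), for u : [a,b] -> R (only values on [a,b] used). *)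
Definition has_gderiv (g : R -> R) (a b : R) (u : R -> R) (t L : R) : Prop :=
  (~ (Dg g t \/ Cg g t) /\
   filterlim (fun s => (u s - u t) / (g s - g t))
     (within (fun s => a <= s <= b /\ g s <> g t /\
                       ((Ngp g t \/ t = a) -> t < s) /\
                       ((Ngm g t \/ t = b) -> s < t))
             (locally t))
     (locally L))
  \/
  ((Dg g t \/ Cg g t) /\
   exists ts, is_tstar g t ts /\
   filterlim (fun s => (u s - u ts) / (g s - g ts))
     (within (fun s => a <= s <= b /\ ts < s /\ g s <> g ts) (locally ts))
     (locally L)).

Definition g_differentiable (g : R -> R) (a b : R) (u : R -> R) (t : R) : Prop :=
  exists L, has_gderiv g a b u t L.

Definition acc_point (X : R -> Prop) (t : R) : Prop :=
  forall eps, eps > 0 -> exists s, X s /\ s <> t /\ Rabs (s - t) < eps.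

Definition Dset1 (g : R -> R) (a b t : R) : Prop :=
  a <= t <= b /\ Ngm g t /\ acc_point (fun s => Dg g s /\ a <= s < t) t.
Definition Dset2 (g : R -> R) (a b t : R) : Prop :=
  a <= t <= b /\ Ngp g t /\ acc_point (fun s => Dg g s /\ t < s <= b) t.
Definition Dset3 (g : R -> R) (a b t : R) : Prop :=
  a <= t <= b /\ ~ Ng g t /\ ~ Dg g t /\
  acc_point (fun s => Dg g s /\ a <= s <= b) t.

Definition lim_ratio_zero (g : R -> R) (a b t ts : R) : Prop :=
  filterlim (fun s => DeltaG g s / (g s - g t))
    (within (fun s => a <= s <= b /\ Dg g s /\ s <> ts /\
                      (Ngm g ts -> s < ts) /\ (Ngp g ts -> ts < s))
            (locally ts))
    (locally 0).

(* Main.v *)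
Require Import Defs.
From Stdlib Require Import Reals Lra Lia ZArith Classical.
From Coquelicot Require Import Coquelicot.
Open Scope R_scope.

Lemma ball_R (x e y : R) : ball x e y <-> Rabs (y - x) < e.
Proof. split; intro H; exact H. Qed.

Definition lim_at (E : R -> Prop) (F : R -> R) (p L : R) : Prop :=
  forall eps, eps > 0 -> exists del, del > 0 /\
    forall s, E s -> Rabs (s - p) < del -> Rabs (F s - L) < eps.

Lemma lim_at_equiv (E : R -> Prop) F p L :
  filterlim F (within E (locally p)) (locally L) <-> lim_at E F p L.
Proof.
  rewrite filterlim_locally. split.
  - intros H eps He. destruct (H (mkposreal eps He)) as [d Hd].
    exists d. split; [apply cond_pos|]. intros s Es Hs. apply Hd; auto.
  - intros H eps. destruct (H eps (cond_pos eps)) as [d [Hd0 Hd]].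
    exists (mkposreal d Hd0). intros s Hs Es. apply Hd; auto.
Qed.

Lemma lim_at_ext (E1 E2 : R -> Prop) F1 F2 p L :
  (forall s, E2 s -> E1 s) -> (forall s, E2 s -> F1 s = F2 s) ->
  lim_at E1 F1 p L -> lim_at E2 F2 p L.
Proof.
  intros HE HF H eps He. destruct (H eps He) as [d [Hd H']].
  exists d; split; auto. intros s Es Hs. rewrite <- HF; auto.
Qed.

Definition proper_at (E : R -> Prop) p := forall del, del > 0 -> exists s, E s /\ Rabs (s - p) < del.

Lemma lim_at_unique E F p L1 L2 : proper_at E p -> lim_at E F p L1 -> lim_at E F p L2 -> L1 = L2.
Proof.
  intros HP H1 H2. destruct (Req_dec L1 L2) as [|Hne]; auto. exfalso.
  set (e := Rabs (L1 - L2) / 2).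
  assert (He : e > 0). { unfold e. assert (Rabs (L1 - L2) > 0) by (apply Rabs_pos_lt; lra). lra. }
  destruct (H1 e He) as [d1 [Hd1 K1]]. destruct (H2 e He) as [d2 [Hd2 K2]].
  destruct (HP (Rmin d1 d2)) as [s [Es Hs]]. apply Rmin_pos; auto.
  specialize (K1 s Es). specialize (K2 s Es).
  assert (A1 : Rabs (F s - L1) < e) by (apply K1; pose proof (Rmin_l d1 d2); lra).
  assert (A2 : Rabs (F s - L2) < e) by (apply K2; pose proof (Rmin_r d1 d2); lra).
  assert (Rabs (L1 - L2) <= Rabs (F s - L1) + Rabs (F s - L2)).
  { replace (L1 - L2) with (-(F s - L1) + (F s - L2)) by ring.
    eapply Rle_trans. apply Rabs_triang. rewrite Rabs_Ropp. lra. }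
  unfold e in *. lra.
Qed.

Lemma gplus_spec g (Hg : nondecreasing g) p :
  (forall s, p < s -> gplus g p <= g s) /\ g p <= gplus g p /\
  (forall eps, eps > 0 -> exists s, p < s /\ g s < gplus g p + eps).
Proof.
  unfold gplus.
  set (S := fun y => exists s, p < s /\ y = g s).
  destruct (Glb_Rbar_correct S) as [Hlb Hgr].
  assert (L1 : Rbar_le (g p) (Glb_Rbar S)).
  { apply Hgr. intros y [s [Hs ->]]. simpl. apply Hg; lra. }
  assert (L2 : Rbar_le (Glb_Rbar S) (g (p+1))).
  { apply Hlb. exists (p+1); split; auto; lra. }
  destruct (Glb_Rbar S) as [l| |] eqn:El; simpl in L1, L2; try contradiction.
  simpl. split; [|split; auto].
  - intros s Hs. assert (Rbar_le l (g s)) by (apply Hlb; exists s; auto). exact H.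
  - intros eps He. apply NNPP; intro Hn.
    assert (Rbar_le (l + eps) l).
    { apply Hgr. intros y [s [Hs ->]]. simpl.
      apply Rnot_lt_le. intro Hl. apply Hn. exists s. auto. }
    simpl in H. lra.
Qed.

Lemma DeltaG_ge0 g (Hg : nondecreasing g) p : 0 <= DeltaG g p.
Proof. unfold DeltaG. destruct (gplus_spec g Hg p) as [_ [H _]]. lra. Qed.

Lemma gplus_le g (Hg : nondecreasing g) p q : p < q -> g p + DeltaG g p <= g q.
Proof. intros. unfold DeltaG. destruct (gplus_spec g Hg p) as [H1 _]. specialize (H1 q H). lra. Qed.

Lemma notDg_Delta0 g (Hg : nondecreasing g) p : ~ Dg g p -> DeltaG g p = 0.
Proof. unfold Dg. intros. pose proof (DeltaG_ge0 g Hg p). lra. Qed.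

Lemma counting g (Hg : nondecreasing g) x y c : x < y -> c > 0 ->
  (forall s, x < s < y -> DeltaG g s >= c) -> False.
Proof.
  intros Hxy Hc H.
  destruct (archimed ((g y - g x) / c)) as [Hup _].
  set (N := Z.to_nat (up ((g y - g x) / c))).
  assert (HN : INR N > (g y - g x)/c).
  { pose proof (pos_INR N). unfold N in *. destruct (Z_lt_le_dec (up ((g y - g x) / c)) 0) as [Hl|Hl].
    - apply IZR_lt in Hl. lra.
    - rewrite INR_IZR_INZ. rewrite Z2Nat.id; auto; lra. }
  set (h := (y - x) / (INR N + 2)).
  assert (Hh : h > 0). { unfold h. apply Rdiv_lt_0_compat. lra. pose proof (pos_INR N). lra. }
  assert (Hk : forall k, (k <= N)%nat -> g (x + INR (S k) * h) >= g (x + h) + INR k * c).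
  { induction k as [|k IH]; intros Hk.
    - simpl. replace (1*h) with h by ring. lra.
    - assert (HkN : INR (S (S k)) <= INR N + 1) by (rewrite S_INR; apply Rplus_le_compat_r; apply le_INR; lia).
      assert (Hpos : INR (S k) * h < y - x).
      { assert (INR (S k) * h <= (INR N + 1) * h).
        { apply Rmult_le_compat_r; [lra|]. rewrite S_INR. apply Rplus_le_compat_r. apply le_INR; lia. }
        assert ((INR N + 1) * h < y - x).
        { unfold h. assert (INR N + 2 > 0) by (pose proof (pos_INR N); lra).
          apply Rmult_lt_reg_r with (INR N + 2); auto. field_simplify; lra. }
        lra. }
      assert (Hs0 : INR (S k) * h > 0). { apply Rmult_lt_0_compat; auto. apply lt_0_INR; lia. }
      specialize (IH ltac:(lia)).
      pose proof (gplus_le g Hg (x + INR (S k) * h) (x + INR (S (S k)) * h)) as G.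
      assert (x + INR (S k) * h < x + INR (S (S k)) * h).
      { rewrite (S_INR (S k)). lra. }
      specialize (G H0).
      specialize (H (x + INR (S k) * h) ltac:(split; lra)).
      assert (INR (S k) * c = INR k * c + c) by (rewrite S_INR; ring). lra. }
  specialize (Hk N (le_n N)).
  assert (Hend : x + INR (S N) * h < y).
  { unfold h. assert (INR N + 2 > 0) by (pose proof (pos_INR N); lra). rewrite S_INR.
    apply Rplus_lt_reg_l with (-x). apply Rmult_lt_reg_r with (INR N + 2); auto. field_simplify; lra. }
  assert (g (x + INR (S N) * h) <= g y) by (apply Hg; lra).
  assert (g x <= g (x + h)) by (apply Hg; lra).
  assert (INR N * c > g y - g x).
  { apply Rgt_ge_trans with ((g y - g x) / c * c). apply Rmult_gt_compat_r; lra. right; field; lra. }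
  lra.
Qed.
Lemma Cg_near g x : Cg g x -> exists e, e > 0 /\ forall y, Rabs (y - x) < e -> g y = g x.
Proof.
  intros [e [He H]]. exists e. split; auto. intros y Hy. apply H; auto.
  rewrite Rminus_eq_0, Rabs_R0; lra.
Qed.

Lemma near_Cg g x e : e > 0 -> (forall y, Rabs (y - x) < e -> g y = g x) -> Cg g x.
Proof.
  intros He H. exists e. split; auto. intros y z Hy Hz. rewrite (H y Hy), (H z Hz). auto.
Qed.

Lemma Rabs_lt_between' x y e : Rabs (y - x) < e <-> x - e < y < x + e.
Proof. split; intro H. apply Rabs_def2 in H; lra. apply Rabs_def1; lra. Qed.

Lemma Dg_notCg g (Hg : nondecreasing g) p : Dg g p -> ~ Cg g p.
Proof.
  intros HD HC. destruct (Cg_near g p HC) as [e [He H]].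
  destruct (gplus_spec g Hg p) as [H1 _].
  specialize (H1 (p + e/2) ltac:(lra)).
  rewrite H in H1 by (apply Rabs_lt_between'; lra).
  unfold Dg, DeltaG in HD. lra.
Qed.

Lemma const_interval g x y : x <= y -> (forall z, x <= z <= y -> Cg g z) -> g y = g x.
Proof.
  intros Hxy HC.
  set (S := fun z => x <= z <= y /\ g z = g x).
  destruct (completeness S) as [m [Hub Hlub]].
  { exists y. intros z [Hz _]. lra. }
  { exists x. split; [lra|auto]. }
  assert (Hxm : x <= m) by (apply Hub; split; [lra|auto]).
  assert (Hmy : m <= y) by (apply Hlub; intros z [Hz _]; lra).
  destruct (Cg_near g m (HC m ltac:(lra))) as [e [He Hm]].
  assert (Hz : exists z, S z /\ m - e < z).
  { apply NNPP; intro Hn. assert (m <= m - e); [|lra]. apply Hlub. intros z Sz.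
    apply Rnot_lt_le. intro. apply Hn. exists z; auto. }
  destruct Hz as [z [[Hz1 Hz2] Hz3]].
  assert (z <= m) by (apply Hub; split; auto).
  assert (Hgm : g m = g x) by (rewrite <- Hz2; symmetry; apply Hm; apply Rabs_lt_between'; lra).
  destruct (Req_dec m y) as [<-|Hne]; auto.
  exfalso. set (w := Rmin (m + e/2) y).
  assert (m < w) by (unfold w; apply Rmin_glb_lt; lra).
  assert (w <= m + e/2) by apply Rmin_l. assert (w <= y) by apply Rmin_r.
  assert (S w). { split; [lra|]. rewrite Hm; auto. apply Rabs_lt_between'; lra. }
  specialize (Hub w H3). lra.
Qed.

Lemma left_cont_eps g (Hl : left_continuous g) p :
  forall eps, eps > 0 -> exists del, del > 0 /\ forall y, p - del < y < p -> Rabs (g y - g p) < eps.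
Proof.
  intros eps He. specialize (Hl p). unfold at_left in Hl.
  apply lim_at_equiv in Hl. destruct (Hl eps He) as [d [Hd H]].
  exists d. split; auto. intros y Hy. apply H. lra. apply Rabs_lt_between'; lra.
Qed.

Lemma comp_left_const g (Hl : left_continuous g) c p : Cg_component g c (Finite p) ->
  exists del, del > 0 /\ forall y, p - del < y <= p -> g y = g p.
Proof.
  intros [Hcp [Hin _]].
  assert (Hx0 : exists x0 : R, Rbar_lt c x0 /\ x0 < p).
  { destruct c as [c| |]; simpl in Hcp; try contradiction.
    - exists ((c+p)/2). simpl. split; lra.
    - exists (p-1). simpl. split; auto; lra. }
  destruct Hx0 as [x0 [Hcx0 Hx0p]].
  assert (Hc : forall y, x0 <= y < p -> g y = g x0).
  { intros y Hy. apply const_interval. lra. intros z Hz. apply Hin.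
    - destruct c as [c| |]; simpl in *; try lra; auto.
    - simpl. lra. }
  assert (Hp : g p = g x0).
  { apply NNPP. intro Hne.
    assert (He : Rabs (g x0 - g p) > 0) by (apply Rabs_pos_lt; intro; apply Hne; lra).
    destruct (left_cont_eps g Hl p _ He) as [d [Hd H]].
    set (y := p - Rmin d (p - x0) / 2).
    assert (Rmin d (p - x0) > 0) by (apply Rmin_pos; lra).
    assert (Rmin d (p - x0) <= d) by apply Rmin_l. assert (Rmin d (p - x0) <= p - x0) by apply Rmin_r.
    specialize (H y ltac:(unfold y; lra)). rewrite Hc in H by (unfold y; lra). lra. }
  exists (p - x0). split; [lra|]. intros y Hy.
  destruct (Req_dec y p) as [->|]; auto. rewrite Hp. apply Hc. lra.
Qed.

Lemma comp_right_const g (Hg : nondecreasing g) p d : Cg_component g (Finite p) d -> ~ Dg g p ->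
  exists del, del > 0 /\ forall y, p <= y < p + del -> g y = g p.
Proof.
  intros [Hcp [Hin _]] HnD.
  assert (Hx1 : exists x1 : R, p < x1 /\ Rbar_lt x1 d).
  { destruct d as [d| |]; simpl in Hcp; try contradiction.
    - exists ((d+p)/2). simpl. split; lra.
    - exists (p+1). simpl. split; auto; lra. }
  destruct Hx1 as [x1 [Hpx1 Hx1d]].
  assert (Hc : forall y, p < y <= x1 -> g y = g x1).
  { intros y Hy. symmetry. apply const_interval. lra. intros z Hz. apply Hin.
    - simpl. lra.
    - destruct d as [d| |]; simpl in *; try lra; auto. }
  destruct (gplus_spec g Hg p) as [G1 [G2 G3]].
  assert (Hgp : gplus g p = g x1).
  { apply Rle_antisym.
    - rewrite <- (Hc ((p+x1)/2)) by lra. apply G1; lra.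
    - apply Rnot_lt_le. intro Hlt. destruct (G3 (g x1 - gplus g p)) as [s [Hs Hs2]]; [lra|].
      assert (g ((p + Rmin s x1)/2) <= g s).
      { apply Hg. assert (Rmin s x1 <= s) by apply Rmin_l. lra. }
      rewrite Hc in H. lra. split. assert (Rmin s x1 > p) by (apply Rmin_glb_lt; lra). lra.
      assert (Rmin s x1 <= x1) by apply Rmin_r. lra. }
  assert (Hpx : g p = g x1). { pose proof (notDg_Delta0 g Hg p HnD). unfold DeltaG in H. lra. }
  exists (x1 - p). split; [lra|]. intros y Hy.
  destruct (Req_dec y p) as [->|]; auto. rewrite Hpx. apply Hc. lra.
Qed.
Lemma LC_right g (Hg : nondecreasing g) p del : ~ Cg g p -> del > 0 ->
  (forall y, p <= y < p + del -> g y = g p) -> exists d, Cg_component g (Finite p) d.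
Proof.
  intros HnC Hd H.
  set (S := fun z => p <= z /\ g z = g p).
  assert (Hup : forall x w, S w -> p < x < w -> Cg g x).
  { intros x w [Hw1 Hw2] Hx. apply near_Cg with (Rmin (x - p) (w - x)).
    apply Rmin_pos; lra. intros y Hy. apply Rabs_lt_between' in Hy.
    assert (Rmin (x - p) (w - x) <= x - p) by apply Rmin_l.
    assert (Rmin (x - p) (w - x) <= w - x) by apply Rmin_r.
    assert (E : forall z, p <= z <= w -> g z = g p).
    { intros z Hz. apply Rle_antisym. rewrite <- Hw2. apply Hg; lra. apply Hg; lra. }
    rewrite (E y), (E x); auto; lra. }
  destruct (classic (bound S)) as [Hb|Hnb].
  - destruct (completeness S Hb) as [m [Hub Hlub]].
    { exists p. split; [lra|auto]. }
    assert (Hpm : p + del/2 <= m) by (apply Hub; split; [lra|]; apply H; lra).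
    exists (Finite m). split; [simpl; lra|]. split; [|split].
    + intros x Hx1 Hx2. simpl in Hx1, Hx2.
      assert (Hw : exists w, S w /\ x < w).
      { apply NNPP; intro Hn. assert (m <= x); [|lra]. apply Hlub. intros z Sz.
        apply Rnot_lt_le. intro. apply Hn. exists z; auto. }
      destruct Hw as [w [Sw Hxw]]. apply (Hup x w Sw). lra.
    + intros r Hr. injection Hr as <-. auto.
    + intros r Hr. injection Hr as <-. intro HC.
      destruct (Cg_near g m HC) as [e [He Hm]].
      assert (Hz : exists z, S z /\ m - e < z).
      { apply NNPP; intro Hn. assert (m <= m - e); [|lra]. apply Hlub. intros z Sz.
        apply Rnot_lt_le. intro. apply Hn. exists z; auto. }
      destruct Hz as [z [[Hz1 Hz2] Hz3]].
      assert (z <= m) by (apply Hub; split; auto).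
      assert (S (m + e/2)).
      { split. lra. rewrite Hm. rewrite <- Hz2. symmetry. apply Hm. apply Rabs_lt_between'; lra.
        apply Rabs_lt_between'; lra. }
      specialize (Hub _ H1). lra.
  - exists p_infty. split; [simpl; auto|]. split; [|split].
    + intros x Hx1 _. simpl in Hx1.
      assert (Hw : exists w, S w /\ x < w).
      { apply NNPP; intro Hn. apply Hnb. exists x. intros z Sz.
        apply Rnot_lt_le. intro. apply Hn. exists z; auto. }
      destruct Hw as [w [Sw Hxw]]. apply (Hup x w Sw). lra.
    + intros r Hr. injection Hr as <-. auto.
    + intros r Hr. discriminate.
Qed.

Lemma LC_left g (Hg : nondecreasing g) p del : ~ Cg g p -> del > 0 ->
  (forall y, p - del < y <= p -> g y = g p) -> exists c, Cg_component g c (Finite p).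
Proof.
  intros HnC Hd H.
  set (S := fun z => -p <= z /\ g (-z) = g p).
  assert (Hup : forall x w, S w -> -w < x < p -> Cg g x).
  { intros x w [Hw1 Hw2] Hx. apply near_Cg with (Rmin (p - x) (x + w)).
    apply Rmin_pos; lra. intros y Hy. apply Rabs_lt_between' in Hy.
    assert (Rmin (p - x) (x + w) <= p - x) by apply Rmin_l.
    assert (Rmin (p - x) (x + w) <= x + w) by apply Rmin_r.
    assert (E : forall z, -w <= z <= p -> g z = g p).
    { intros z Hz. apply Rle_antisym. apply Hg; lra. rewrite <- Hw2. apply Hg; lra. }
    rewrite (E y), (E x); auto; lra. }
  destruct (classic (bound S)) as [Hb|Hnb].
  - destruct (completeness S Hb) as [m [Hub Hlub]].
    { exists (-p). split; [lra|]. rewrite Ropp_involutive. auto. }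
    assert (Hpm : -p + del/2 <= m).
    { apply Hub; split; [lra|]; apply H; lra. }
    exists (Finite (-m)). split; [simpl; lra|]. split; [|split].
    + intros x Hx1 Hx2. simpl in Hx1, Hx2.
      assert (Hw : exists w, S w /\ -x < w).
      { apply NNPP; intro Hn. assert (m <= -x); [|lra]. apply Hlub. intros z Sz.
        apply Rnot_lt_le. intro. apply Hn. exists z; auto. }
      destruct Hw as [w [Sw Hxw]]. apply (Hup x w Sw). lra.
    + intros r Hr. injection Hr as <-. intro HC.
      destruct (Cg_near g (-m) HC) as [e [He Hm]].
      assert (Hz : exists z, S z /\ m - e < z).
      { apply NNPP; intro Hn. assert (m <= m - e); [|lra]. apply Hlub. intros z Sz.
        apply Rnot_lt_le. intro. apply Hn. exists z; auto. }
      destruct Hz as [z [[Hz1 Hz2] Hz3]].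
      assert (z <= m) by (apply Hub; split; auto).
      assert (S (m + e/2)).
      { split. lra. rewrite Hm. rewrite <- Hz2. symmetry. apply Hm. apply Rabs_lt_between'; lra.
        apply Rabs_lt_between'; lra. }
      specialize (Hub _ H1). lra.
    + intros r Hr. injection Hr as <-. auto.
  - exists m_infty. split; [simpl; auto|]. split; [|split].
    + intros x _ Hx2. simpl in Hx2.
      assert (Hw : exists w, S w /\ -x < w).
      { apply NNPP; intro Hn. apply Hnb. exists (-x). intros z Sz.
        apply Rnot_lt_le. intro. apply Hn. exists z; auto. }
      destruct Hw as [w [Sw Hxw]]. apply (Hup x w Sw). lra.
    + intros r Hr. discriminate.
    + intros r Hr. injection Hr as <-. auto.
Qed.

Lemma right_strict g (Hg : nondecreasing g) p s : ~ Cg g p -> ~ Dg g p -> ~ Ngm g p ->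
  p < s -> g p < g s.
Proof.
  intros HC HD HN Hs. destruct (Hg p s ltac:(lra)) as [|Heq]; auto. exfalso.
  apply HN. split; auto. apply (LC_right g Hg p (s - p)); auto. lra.
  intros y Hy. apply Rle_antisym. rewrite Heq. apply Hg; lra. apply Hg; lra.
Qed.

Lemma left_strict g (Hg : nondecreasing g) p s : ~ Cg g p -> ~ Dg g p -> ~ Ngp g p ->
  s < p -> g s < g p.
Proof.
  intros HC HD HN Hs. destruct (Hg s p ltac:(lra)) as [|Heq]; auto. exfalso.
  apply HN. split; auto. apply (LC_left g Hg p (p - s)); auto. lra.
  intros y Hy. apply Rle_antisym. apply Hg; lra. rewrite <- Heq. apply Hg; lra.
Qed.

Lemma Ngp_notCg g p : Ngp g p -> ~ Cg g p.
Proof. intros [[c [_ [_ [_ H]]]] _]. apply (H p eq_refl). Qed.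

Lemma Ngm_notCg g p : Ngm g p -> ~ Cg g p.
Proof. intros [[c [_ [_ [H _]]]] _]. apply (H p eq_refl). Qed.

Lemma Ngm_Ngp g (Hg : nondecreasing g) (Hl : left_continuous g) p : Ngm g p -> Ngp g p -> False.
Proof.
  intros Hm Hp. apply (Ngp_notCg g p Hp).
  destruct Hm as [[d Hd] HnD]. destruct Hp as [[c Hc] _].
  destruct (comp_left_const g Hl c p Hc) as [d1 [Hd1 K1]].
  destruct (comp_right_const g Hg p d Hd HnD) as [d2 [Hd2 K2]].
  apply near_Cg with (Rmin d1 d2). apply Rmin_pos; auto.
  intros y Hy. apply Rabs_lt_between' in Hy.
  assert (Rmin d1 d2 <= d1) by apply Rmin_l. assert (Rmin d1 d2 <= d2) by apply Rmin_r.
  destruct (Rle_lt_dec y p). apply K1; lra. apply K2; lra.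
Qed.
Definition Eset (g : R -> R) (a b p : R) (Rc Lf : Prop) : R -> Prop :=
  fun s => a <= s <= b /\ g s <> g p /\ (Rc -> p < s) /\ (Lf -> s < p).

Definition Fq g p : R -> R := fun s => (DeltaG g s - DeltaG g p) / (g s - g p).

Definition proper_in (E : R -> Prop) a b p :=
  forall del, del > 0 -> exists s, E s /\ Rabs (s - p) < del /\ a < s < b.

Lemma proper_in_at E a b p : proper_in E a b p -> proper_at E p.
Proof. intros H d Hd. destruct (H d Hd) as [s [? [? _]]]. exists s; auto. Qed.

Lemma Fq_mul g p s : g s <> g p -> DeltaG g s - DeltaG g p = Fq g p s * (g s - g p).
Proof. intros. unfold Fq. field. intro. apply H. lra. Qed.

Lemma lim_zero g (Hg : nondecreasing g) a b p Rc Lf L :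
  ~ Dg g p -> proper_in (Eset g a b p Rc Lf) a b p ->
  lim_at (Eset g a b p Rc Lf) (Fq g p) p L -> L = 0.
Proof.
  intros HnD HP H. pose proof (notDg_Delta0 g Hg p HnD) as D0.
  destruct (Req_dec L 0) as [|HL]; auto. exfalso.
  assert (HLa : Rabs L > 0) by (apply Rabs_pos_lt; auto).
  destruct (H (Rabs L / 2) ltac:(lra)) as [d [Hd K]].
  destruct (HP d Hd) as [s1 [Es1 [Hs1 Hab1]]].
  pose proof Es1 as [Hs1ab [Hs1n [HR1 HL1]]].
  pose proof (K s1 Es1 Hs1) as K1.
  pose proof (Fq_mul g p s1 Hs1n) as M1. rewrite D0 in M1.
  pose proof (DeltaG_ge0 g Hg s1) as P1.
  apply Rabs_lt_between' in Hs1.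
  destruct (Rlt_or_le p s1) as [Hps|Hps].
  - assert (G1 : g p < g s1) by (destruct (Hg p s1 ltac:(lra)); auto; congruence).
    assert (F1 : Fq g p s1 >= 0).
    { destruct (Rlt_or_le (Fq g p s1) 0); [|lra]. nra. }
    assert (HLp : L > 0).
    { destruct (Rlt_or_le L 0); [|destruct (Req_dec L 0); [contradiction|lra]]. rewrite (Rabs_left L) in K1, HLa by lra.
      apply Rabs_def2 in K1. lra. }
    rewrite (Rabs_right L) in K by lra.
    apply (counting g Hg s1 (Rmin b (p + d)) ((L/2) * (g s1 - g p))).
    + apply Rmin_glb_lt; lra.
    + apply Rmult_lt_0_compat; lra.
    + intros s Hs. assert (Rmin b (p+d) <= b) by apply Rmin_l.
      assert (Rmin b (p+d) <= p + d) by apply Rmin_r.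
      assert (Gs : g s1 <= g s) by (apply Hg; lra).
      assert (Es : Eset g a b p Rc Lf s).
      { split; [lra|]. split; [lra|]. split. intros; lra. intros HLf; specialize (HL1 HLf); lra. }
      assert (Ks := K s Es ltac:(apply Rabs_lt_between'; lra)).
      apply Rabs_def2 in Ks.
      pose proof (Fq_mul g p s ltac:(lra)) as Ms. rewrite D0 in Ms.
      assert (Fq g p s * (g s - g p) >= (L/2) * (g s - g p)).
      { apply Rmult_ge_compat_r; lra. }
      assert ((L/2) * (g s - g p) >= (L/2) * (g s1 - g p)).
      { apply Rmult_ge_compat_l; lra. }
      lra.
  - assert (Hsp : s1 < p) by (destruct Hps as [|<-]; auto; congruence).
    assert (G1 : g s1 < g p) by (destruct (Hg s1 p ltac:(lra)); auto; congruence).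
    assert (F1 : Fq g p s1 <= 0).
    { destruct (Rlt_or_le 0 (Fq g p s1)); [|lra]. nra. }
    assert (HLp : L < 0).
    { destruct (Rlt_or_le 0 L); [|destruct (Req_dec L 0); [contradiction|lra]].
      rewrite (Rabs_right L) in K1, HLa by lra.
      apply Rabs_def2 in K1. lra. }
    rewrite (Rabs_left L) in K by lra.
    apply (counting g Hg (Rmax a (p - d)) s1 ((-L/2) * (g p - g s1))).
    + apply Rmax_lub_lt; lra.
    + apply Rmult_lt_0_compat; lra.
    + intros s Hs. assert (a <= Rmax a (p-d)) by apply Rmax_l.
      assert (p - d <= Rmax a (p-d)) by apply Rmax_r.
      assert (Gs : g s <= g s1) by (apply Hg; lra).
      assert (Es : Eset g a b p Rc Lf s).
      { split; [lra|]. split; [lra|]. split. intros HR; specialize (HR1 HR); lra. intros; lra. }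
      assert (Ks := K s Es ltac:(apply Rabs_lt_between'; lra)).
      apply Rabs_def2 in Ks.
      pose proof (Fq_mul g p s ltac:(lra)) as Ms. rewrite D0 in Ms.
      assert (Fq g p s * (g s - g p) >= (L/2) * (g s - g p)).
      { replace (Fq g p s * (g s - g p)) with ((- Fq g p s) * (g p - g s)) by ring.
        replace ((L/2) * (g s - g p)) with ((-L/2) * (g p - g s)) by field.
        apply Rmult_ge_compat_r; lra. }
      assert ((L/2) * (g s - g p) = (-L/2) * (g p - g s)) by field.
      assert ((-L/2) * (g p - g s) >= (-L/2) * (g p - g s1)).
      { apply Rmult_ge_compat_l; lra. }
      lra.
Qed.
Lemma lim_Dg g (Hg : nondecreasing g) (E : R -> Prop) p : Dg g p -> (forall s, E s -> p < s) ->
  lim_at E (Fq g p) p (-1).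
Proof.
  intros HD HE eps He. unfold Dg in HD.
  destruct (gplus_spec g Hg p) as [G1 [G2 G3]].
  destruct (G3 (eps * DeltaG g p / 2)) as [s0 [Hs0 Hg0]].
  { apply Rmult_lt_0_compat. apply Rmult_lt_0_compat; lra. lra. }
  exists (s0 - p). split; [lra|]. intros s Es Hs. specialize (HE s Es).
  apply Rabs_lt_between' in Hs.
  assert (A1 : gplus g p <= g s) by (apply G1; lra).
  assert (A2 : g s + DeltaG g s <= g s0) by (apply gplus_le; auto; lra).
  assert (A3 : 0 <= DeltaG g s) by (apply DeltaG_ge0; auto).
  unfold DeltaG in HD. set (Dp := gplus g p - g p) in *.
  assert (HD' : DeltaG g p = Dp) by reflexivity.
  assert (Hden : g s - g p >= Dp) by (unfold Dp; lra).
  set (N := DeltaG g s + g s - gplus g p).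
  assert (EQ : Fq g p s - -1 = N / (g s - g p)).
  { unfold Fq, N. rewrite HD'. unfold Dp. field. lra. }
  rewrite EQ. rewrite Rabs_right.
  2:{ apply Rle_ge. apply Rdiv_le_0_compat; unfold N; lra. }
  apply Rmult_lt_reg_r with (g s - g p). lra.
  replace (N / (g s - g p) * (g s - g p)) with N by (field; lra).
  assert (N < eps * Dp / 2) by (unfold N; rewrite HD' in Hg0; lra).
  assert (eps * Dp <= eps * (g s - g p)) by (apply Rmult_le_compat_l; lra).
  assert (eps * Dp > 0) by (apply Rmult_lt_0_compat; lra).
  lra.
Qed.

Lemma proper_Dg g (Hg : nondecreasing g) a b p Rc Lf : Dg g p -> a <= p < b -> ~ Lf ->
  proper_in (Eset g a b p Rc Lf) a b p.
Proof.
  intros HD Hp HL d Hd. unfold Dg, DeltaG in HD.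
  destruct (gplus_spec g Hg p) as [G1 _].
  set (s := p + Rmin d (b - p) / 2).
  assert (Rmin d (b - p) > 0) by (apply Rmin_pos; lra).
  assert (Rmin d (b - p) <= d) by apply Rmin_l. assert (Rmin d (b - p) <= b - p) by apply Rmin_r.
  exists s. split; [|split; [apply Rabs_lt_between'; unfold s; lra| unfold s; lra]].
  assert (gplus g p <= g s) by (apply G1; unfold s; lra).
  split; [unfold s; lra|]. split; [lra|]. split; [intros; unfold s; lra|intros; contradiction].
Qed.

Lemma proper_right g (Hg : nondecreasing g) a b p Rc Lf : ~ Cg g p -> ~ Dg g p -> ~ Ngm g p ->
  a <= p < b -> ~ Lf -> proper_in (Eset g a b p Rc Lf) a b p.
Proof.
  intros HC HD HN Hp HL d Hd.
  set (s := p + Rmin d (b - p) / 2).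
  assert (Rmin d (b - p) > 0) by (apply Rmin_pos; lra).
  assert (Rmin d (b - p) <= d) by apply Rmin_l. assert (Rmin d (b - p) <= b - p) by apply Rmin_r.
  exists s. split; [|split; [apply Rabs_lt_between'; unfold s; lra| unfold s; lra]].
  assert (g p < g s) by (apply right_strict; auto; unfold s; lra).
  split; [unfold s; lra|]. split; [lra|]. split; [intros; unfold s; lra|intros; contradiction].
Qed.

Lemma proper_left g (Hg : nondecreasing g) a b p Rc Lf : ~ Cg g p -> ~ Dg g p -> ~ Ngp g p ->
  a < p <= b -> ~ Rc -> proper_in (Eset g a b p Rc Lf) a b p.
Proof.
  intros HC HD HN Hp HR d Hd.
  set (s := p - Rmin d (p - a) / 2).
  assert (Rmin d (p - a) > 0) by (apply Rmin_pos; lra).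
  assert (Rmin d (p - a) <= d) by apply Rmin_l. assert (Rmin d (p - a) <= p - a) by apply Rmin_r.
  exists s. split; [|split; [apply Rabs_lt_between'; unfold s; lra| unfold s; lra]].
  assert (g s < g p) by (apply left_strict; auto; unfold s; lra).
  split; [unfold s; lra|]. split; [lra|]. split; [intros; contradiction|intros; unfold s; lra].
Qed.

Lemma notacc (X : R -> Prop) p : ~ acc_point X p ->
  exists e, e > 0 /\ forall s, X s -> s <> p -> Rabs (s - p) >= e.
Proof.
  intro H. apply NNPP. intro Hn. apply H. intros e He. apply NNPP. intro Hn2.
  apply Hn. exists e. split; auto. intros s Xs Hsp. apply Rnot_lt_ge. intro.
  apply Hn2. exists s. auto.
Qed.

Lemma comp_const_all g (Hg : nondecreasing g) (Hl : left_continuous g) c p :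
  Cg_component g c (Finite p) -> forall x : R, Rbar_lt c x -> x <= p -> g x = g p.
Proof.
  intros Hc x Hcx Hxp. destruct (comp_left_const g Hl c p Hc) as [d [Hd K]].
  destruct Hc as [_ [Hin _]].
  set (y := Rmax x (p - d/2)).
  assert (x <= y) by apply Rmax_l. assert (p - d/2 <= y) by apply Rmax_r.
  assert (y <= p) by (apply Rmax_lub; lra).
  rewrite <- (K y) by lra.
  destruct (Req_dec x p) as [->|Hne].
  - symmetry; apply K; lra.
  - assert (y < p) by (apply Rmax_lub_lt; lra).
    symmetry. apply const_interval; auto. intros z Hz. apply Hin.
    + destruct c as [c| |]; simpl in *; try contradiction; auto; lra.
    + simpl; lra.
Qed.

Lemma tstar_notCg g t ts : ~ Cg g t -> is_tstar g t ts -> ts = t.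
Proof.
  intros HC [[_ H]|[c [[_ [Hin _]] [Hct Hts]]]]; auto.
  exfalso. apply HC. apply Hin; simpl; auto.
Qed.

Lemma tstar_unique g t ts1 ts2 : is_tstar g t ts1 -> is_tstar g t ts2 -> ts1 = ts2.
Proof.
  intros [[HC1 E1]|[c1 [[_ [Hin1 [_ Hn1]]] [Hc1 Ht1]]]] [[HC2 E2]|[c2 [[_ [Hin2 [_ Hn2]]] [Hc2 Ht2]]]].
  - congruence.
  - exfalso. apply HC1. apply Hin2; simpl; auto.
  - exfalso. apply HC2. apply Hin1; simpl; auto.
  - destruct (Rtotal_order ts1 ts2) as [H|[H|H]]; auto; exfalso.
    + apply (Hn1 ts1 eq_refl). apply Hin2; simpl; auto.
      destruct c2 as [c2| |]; simpl in *; try contradiction; auto; lra.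
    + apply (Hn2 ts2 eq_refl). apply Hin1; simpl; auto.
      destruct c1 as [c1| |]; simpl in *; try contradiction; auto; lra.
Qed.
Definition Zset g a b p : R -> Prop :=
  fun s => a <= s <= b /\ Dg g s /\ s <> p /\ (Ngm g p -> s < p) /\ (Ngp g p -> p < s).

Definition Dsets g a b p := Dset1 g a b p \/ Dset2 g a b p \/ Dset3 g a b p.

Lemma lrz_equiv g (Hg : nondecreasing g) a b t p : ~ Dg g p -> g t = g p ->
  (lim_ratio_zero g a b t p <-> lim_at (Zset g a b p) (Fq g p) p 0).
Proof.
  intros HD Ht. unfold lim_ratio_zero. rewrite Ht. rewrite lim_at_equiv.
  pose proof (notDg_Delta0 g Hg p HD) as D0.
  split; apply lim_at_ext; auto; intros s _; unfold Fq; rewrite D0, Rminus_0_r; auto.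
Qed.

Lemma zero_from_Z g (Hg : nondecreasing g) (E Z : R -> Prop) p : ~ Dg g p ->
  (forall s, E s -> Dg g s -> Z s) -> lim_at Z (Fq g p) p 0 -> lim_at E (Fq g p) p 0.
Proof.
  intros HD HEZ H eps He. destruct (H eps He) as [d [Hd K]]. exists d; split; auto.
  intros s Es Hs. destruct (classic (Dg g s)) as [HDs|HDs].
  - apply K; auto.
  - unfold Fq. rewrite (notDg_Delta0 g Hg p HD), (notDg_Delta0 g Hg s HDs).
    replace ((0 - 0) / (g s - g p) - 0) with 0 by (unfold Rdiv; ring). rewrite Rabs_R0; lra.
Qed.

Lemma far_lim (Z : R -> Prop) F p L : (exists e, e > 0 /\ forall s, Z s -> Rabs (s - p) >= e) ->
  lim_at Z F p L.
Proof.
  intros [e [He H]] eps Heps. exists e. split; auto. intros s Zs Hs. specialize (H s Zs). lra.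
Qed.

Lemma generic g (Hg : nondecreasing g) a b t p Rc Lf :
  a <= p <= b -> g t = g p ->
  (Dg g p -> Rc /\ ~ Lf) -> proper_in (Eset g a b p Rc Lf) a b p ->
  (~ Dg g p -> forall s, Zset g a b p s -> Eset g a b p Rc Lf s) ->
  (~ Dg g p -> forall s, Eset g a b p Rc Lf s -> Dg g s -> Zset g a b p s) ->
  (~ Dg g p -> ~ Dsets g a b p -> exists e, e > 0 /\ forall s, Zset g a b p s -> Rabs (s - p) >= e) ->
  (forall L, has_gderiv g a b (DeltaG g) t L <-> lim_at (Eset g a b p Rc Lf) (Fq g p) p L) ->
  (Dsets g a b p -> (g_differentiable g a b (DeltaG g) t <-> lim_ratio_zero g a b t p)) /\
  (~ Dsets g a b p -> g_differentiable g a b (DeltaG g) t) /\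
  (forall L, has_gderiv g a b (DeltaG g) t L -> (Dg g p -> L = -1) /\ (~ Dg g p -> L = 0)) /\
  ((forall t', Dsets g a b t' -> lim_ratio_zero g a b t' t') ->
     (Dg g p -> has_gderiv g a b (DeltaG g) t (-1)) /\ (~ Dg g p -> has_gderiv g a b (DeltaG g) t 0)).
Proof.
  set (E := Eset g a b p Rc Lf). intros Hp Ht HDR HP HZ1 HZ2 HZn Hder.
  assert (Hm1 : Dg g p -> lim_at E (Fq g p) p (-1)).
  { intros HD. apply lim_Dg; auto. intros s [_ [_ [H _]]]. apply H. apply HDR; auto. }
  assert (HDs : Dsets g a b p -> ~ Dg g p).
  { intros [[_ [[_ H] _]]|[[_ [[_ H] _]]|[_ [_ [H _]]]]]; auto. }
  assert (Hval : forall L, has_gderiv g a b (DeltaG g) t L -> (Dg g p -> L = -1) /\ (~ Dg g p -> L = 0)).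
  { intros L HL. apply Hder in HL. split.
    - intros HD. exact (lim_at_unique E (Fq g p) p L (-1) (proper_in_at E a b p HP) HL (Hm1 HD)).
    - intros HD. apply (lim_zero g Hg a b p Rc Lf L); auto. }
  assert (Hiff : ~ Dg g p -> (g_differentiable g a b (DeltaG g) t <-> lim_ratio_zero g a b t p)).
  { intros HD. rewrite (lrz_equiv g Hg a b t p HD Ht). split.
    - intros [L HL]. pose proof (proj2 (Hval L HL) HD) as HL0. subst L.
      apply Hder in HL. apply (lim_at_ext E _ (Fq g p)); auto.
    - intros H. exists 0. apply Hder. apply (zero_from_Z g Hg E (Zset g a b p)); auto. }
  split; [|split; [|split]].
  - intros HDs'. apply Hiff. auto.
  - intros HnDs. destruct (classic (Dg g p)) as [HD|HD].
    + exists (-1). apply Hder. auto.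
    + exists 0. apply Hder. apply (zero_from_Z g Hg E (Zset g a b p)); auto. apply far_lim. auto.
  - exact Hval.
  - intros Hall. split.
    + intros HD. apply Hder. auto.
    + intros HD. apply Hder. apply (zero_from_Z g Hg E (Zset g a b p)); auto.
      destruct (classic (Dsets g a b p)) as [HDs'|HnDs].
      * specialize (Hall p HDs'). apply (lrz_equiv g Hg a b p p HD eq_refl) in Hall. auto.
      * apply far_lim. auto.
Qed.
Lemma hder_second g a b t p L : (Dg g t \/ Cg g t) -> is_tstar g t p ->
  (has_gderiv g a b (DeltaG g) t L <-> lim_at (Eset g a b p True False) (Fq g p) p L).
Proof.
  intros HDC Hts. unfold has_gderiv. split.
  - intros [[Hn _]|[_ [ts' [Hts' Hlim]]]]. contradiction.
    rewrite (tstar_unique g t p ts' Hts Hts'). apply lim_at_equiv in Hlim.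
    revert Hlim. apply lim_at_ext; auto. intros s [H1 [H2 [H3 _]]]. exact (conj H1 (conj (H3 I) H2)).
  - intros H. right. split; auto. exists p. split; auto. apply lim_at_equiv.
    revert H. apply lim_at_ext; auto. intros s [H1 [H2 H3]].
    exact (conj H1 (conj H3 (conj (fun _ => H2) (fun f : False => match f with end)))).
Qed.

Lemma hder_first g a b t L : ~ Dg g t -> ~ Cg g t ->
  (has_gderiv g a b (DeltaG g) t L <->
   lim_at (Eset g a b t (Ngp g t \/ t = a) (Ngm g t \/ t = b)) (Fq g t) t L).
Proof.
  intros HD HC. unfold has_gderiv. split.
  - intros [[_ Hlim]|[[H|H] _]]; try contradiction. apply lim_at_equiv in Hlim. exact Hlim.
  - intros H. left. split. intros [|]; contradiction. apply lim_at_equiv. exact H.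
Qed.

Lemma per_point g a b t ts :
  nondecreasing g -> left_continuous g -> a < b ->
  ~ Ngm g a -> ~ (Dg g b \/ Cg g b \/ Ngp g b) ->
  a <= t <= b -> is_tstar g t ts ->
  (Dsets g a b ts -> (g_differentiable g a b (DeltaG g) t <-> lim_ratio_zero g a b t ts)) /\
  (~ Dsets g a b ts -> g_differentiable g a b (DeltaG g) t) /\
  (forall L, has_gderiv g a b (DeltaG g) t L -> (Dg g ts -> L = -1) /\ (~ Dg g ts -> L = 0)) /\
  ((forall t', Dsets g a b t' -> lim_ratio_zero g a b t' t') ->
     (Dg g ts -> has_gderiv g a b (DeltaG g) t (-1)) /\ (~ Dg g ts -> has_gderiv g a b (DeltaG g) t 0)).
Proof.
  intros Hg Hl Hab Ha Hb Ht Hts.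
  destruct (classic (Dg g t)) as [HDt|HDt].
  -
    assert (HCt : ~ Cg g t) by (apply Dg_notCg; auto).
    pose proof (tstar_notCg g t ts HCt Hts) as ->.
    assert (Htb : t < b) by (destruct Ht as [_ [|<-]]; auto; exfalso; apply Hb; auto).
    refine (generic g Hg a b t t True False _ _ _ _ _ _ _ _).
    + lra.
    + reflexivity.
    + intros. split; auto.
    + apply proper_Dg; auto. lra.
    + intros; contradiction.
    + intros; contradiction.
    + intros; contradiction.
    + intros L. apply hder_second; auto.
  - destruct (classic (Cg g t)) as [HCt|HCt].
    +
      destruct Hts as [[HC' _]|[c [Hcomp [Hct Htts]]]]; [contradiction|].
      assert (HCts : ~ Cg g ts) by (destruct Hcomp as [_ [_ [_ H]]]; apply H; auto).
      assert (Htsb : ts <= b).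
      { apply Rnot_lt_le. intro Hlt. apply Hb. right; left. destruct Hcomp as [_ [Hin _]].
        apply Hin; simpl; auto. destruct c as [c| |]; simpl in *; try contradiction; auto; lra. }
      assert (Htsb' : ts < b).
      { destruct Htsb as [|Heqb]; auto. subst ts. exfalso. apply Hb. destruct (classic (Dg g b)); auto.
        right; right. split; eauto. }
      assert (Hgt : g t = g ts) by (apply (comp_const_all g Hg Hl c ts Hcomp); auto; lra).
      assert (HNp : ~ Dg g ts -> Ngp g ts) by (intros; split; eauto).
      assert (HNm : ~ Dg g ts -> ~ Ngm g ts) by (intros H H'; apply (Ngm_Ngp g Hg Hl ts H'); auto).
      refine (generic g Hg a b t ts True False _ _ _ _ _ _ _ _).
      * lra.
      * exact Hgt.
      * intros. split; auto.
      * destruct (classic (Dg g ts)).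
        -- apply proper_Dg; auto. lra.
        -- apply proper_right; auto. lra.
      * intros HD s [Hs1 [Hs2 [Hs3 [Hs4 Hs5]]]]. specialize (Hs5 (HNp HD)).
        split; auto. split; [|split; auto; intros []].
        pose proof (right_strict g Hg ts s HCts HD (HNm HD) Hs5). lra.
      * intros HD s [Hs1 [Hs2 [Hs3 _]]] HDs. specialize (Hs3 I).
        split; auto. split; auto. split; [lra|]. split; auto. intro. exfalso; apply (HNm HD); auto.
      * intros HD HnDs.
        assert (Hnacc : ~ acc_point (fun s => Dg g s /\ ts < s <= b) ts).
        { intro Hacc. apply HnDs. right; left. split; [lra|]. split; auto. }
        destruct (notacc _ _ Hnacc) as [e [He K]]. exists e. split; auto.
        intros s [Hs1 [Hs2 [Hs3 [_ Hs5]]]]. apply K; auto. split; auto. split; [apply Hs5; auto|lra].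
      * intros L. apply hder_second; auto. right. exists c. auto.
    +
      pose proof (tstar_notCg g t ts HCt Hts) as ->.
      assert (HnMP : ~ (Ngm g t /\ Ngp g t)) by (intros [H1 H2]; apply (Ngm_Ngp g Hg Hl t); auto).
      refine (generic g Hg a b t t (Ngp g t \/ t = a) (Ngm g t \/ t = b) _ _ _ _ _ _ _ _).
      * lra.
      * reflexivity.
      * intros; contradiction.
      * destruct (classic (Ngm g t \/ t = b)) as [HL|HL].
        -- apply proper_left; auto.
           ++ intro HP. destruct HL as [HL| ->]; [apply HnMP; auto| apply Hb; auto].
           ++ split; [|lra]. destruct Ht as [[|<-] _]; auto. exfalso. destruct HL as [HL|HL].
              apply Ha; auto. lra.
           ++ intros [HR| ->]. destruct HL as [HL|HL]. apply HnMP; auto. apply Hb; subst; auto. 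
              destruct HL as [HL|HL]. apply Ha; auto. lra.
        -- apply proper_right; auto.
           ++ split; [lra|]. destruct Ht as [_ [|Heq]]; auto. exfalso; apply HL; auto.
      * intros _ s [Hs1 [Hs2 [Hs3 [Hs4 Hs5]]]].
        split; auto. destruct (Rtotal_order s t) as [Hst|[Hst|Hst]]; [|contradiction|].
        -- assert (HnP : ~ Ngp g t) by (intro H; specialize (Hs5 H); lra).
           pose proof (left_strict g Hg t s HCt HDt HnP Hst) as Hlt.
           split; [lra|]. split; auto. intros [H0| ->]. contradiction. lra.
        -- assert (HnM : ~ Ngm g t) by (intro H; specialize (Hs4 H); lra).
           pose proof (right_strict g Hg t s HCt HDt HnM Hst) as Hlt.
           split; [lra|]. split; auto. intros [H0| ->]. contradiction. lra.
      * intros _ s [Hs1 [Hs2 [Hs3 Hs4]]] HDs.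
        split; auto. split; auto. split; [intro; subst; auto|]. split; auto.
      * intros _ HnDs.
        destruct (classic (Ngm g t)) as [HM|HM].
        -- assert (Hnacc : ~ acc_point (fun s => Dg g s /\ a <= s < t) t).
           { intro Hacc. apply HnDs. left. split; auto. }
           destruct (notacc _ _ Hnacc) as [e [He K]]. exists e. split; auto.
           intros s [Hs1 [Hs2 [Hs3 [Hs4 _]]]]. apply K; auto. split; auto. split; [lra|]. apply Hs4; auto.
        -- destruct (classic (Ngp g t)) as [HP|HP].
           ++ assert (Hnacc : ~ acc_point (fun s => Dg g s /\ t < s <= b) t).
              { intro Hacc. apply HnDs. right; left. split; auto. }
              destruct (notacc _ _ Hnacc) as [e [He K]]. exists e. split; auto.
              intros s [Hs1 [Hs2 [Hs3 [_ Hs5]]]]. apply K; auto. split; auto. split; [|lra]. apply Hs5; auto.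
           ++ assert (Hnacc : ~ acc_point (fun s => Dg g s /\ a <= s <= b) t).
              { intro Hacc. apply HnDs. right; right. split; auto. split; auto. intros [|]; contradiction. }
              destruct (notacc _ _ Hnacc) as [e [He K]]. exists e. split; auto.
              intros s [Hs1 [Hs2 [Hs3 _]]]. apply K; auto.
      * intros L. apply hder_first; auto.
Qed.

Theorem corollary3p6 (g : R -> R) (a b : R) :
  nondecreasing g -> left_continuous g -> a < b ->
  ~ Ngm g a -> ~ (Dg g b \/ Cg g b \/ Ngp g b) ->
  (forall t ts, a <= t <= b -> is_tstar g t ts ->
     ((Dset1 g a b ts \/ Dset2 g a b ts \/ Dset3 g a b ts) ->
        (g_differentiable g a b (DeltaG g) t <-> lim_ratio_zero g a b t ts)) /\
     (~ (Dset1 g a b ts \/ Dset2 g a b ts \/ Dset3 g a b ts) ->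
        g_differentiable g a b (DeltaG g) t) /\
     (forall L, has_gderiv g a b (DeltaG g) t L ->
        (Dg g ts -> L = -1) /\ (~ Dg g ts -> L = 0))) /\
  ((forall t, (Dset1 g a b t \/ Dset2 g a b t \/ Dset3 g a b t) -> lim_ratio_zero g a b t t) ->
   forall t ts, a <= t <= b -> is_tstar g t ts ->
     (Dg g ts -> has_gderiv g a b (DeltaG g) t (-1)) /\
     (~ Dg g ts -> has_gderiv g a b (DeltaG g) t 0)).
Proof.
  intros Hg Hl Hab Ha Hb. split.
  - intros t ts Ht Hts. destruct (per_point g a b t ts Hg Hl Hab Ha Hb Ht Hts) as [A [B [C _]]].
    split; [exact A|split; [exact B|exact C]].
  - intros Hall t ts Ht Hts. destruct (per_point g a b t ts Hg Hl Hab Ha Hb Ht Hts) as [_ [_ [_ D]]].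
    apply D. exact Hall.
Qed.
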